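(* Let $k$ be a non-negative integer, $a_0,\dots,a_k\in\mathbb{C}$, and $\Lambda=\sum_{i=0}^{k}a_i(Dx)^iD$ acting on $\mathcal{P}$. (i) For any positive integer $k$, $\Lambda=0$ if and only if $a_i=0$ for $i=0,\dots,k$. (ii) Suppose $a_k\neq0$. Then $\Lambda$ is a lowering operator if and only if the polynomial $f(x)=\sum_{i=0}^{k}a_ix^i$ has no positive integer root.
   Context: $\mathcal{P}$ is the space of complex polynomials in $x$; $D$ is the derivative, $x$ is multiplication by $x$, and products of operators are compositions. A lowering operator is a linear map $\mathcal{O}:\mathcal{P}\to\mathcal{P}$ with $\mathcal{O}(1)=0$ and $\deg(\mathcal{O}(x^n))=n-1$ for all $n\ge1$. *)

(* Defs.v *)
From mathcomp Require Import all_boot all_algebra complex reals.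
Set Implicit Arguments. Unset Strict Implicit. Unset Printing Implicit Defensive.
Import GRing.Theory.
Local Open Scope ring_scope.

Section Ops.
Variable F : fieldType.

Definition opD (p : {poly F}) : {poly F} := deriv p.
Definition opX (p : {poly F}) : {poly F} := 'X * p.
Definition opDx (p : {poly F}) : {poly F} := opD (opX p).

Definition Lambda (k : nat) (a : nat -> F) (p : {poly F}) : {poly F} :=
  \sum_(i < k.+1) a i *: iter i opDx (opD p).

(* Lowering operator: linear map O with O(1) = 0 and deg O(x^n) = n-1 for n >= 1
   (deg q = n - 1 with n >= 1 is  size q = n). *)
Definition lowering (O : {poly F} -> {poly F}) : Prop :=
  (forall (c : F) (p q : {poly F}), O (c *: p + q) = c *: O p + O q) /\
  O 1 = 0 /\
  (forall n : nat, (0 < n)%N -> size (O 'X^n) = n).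

Definition fpoly (k : nat) (a : nat -> F) : {poly F} :=
  \sum_(i < k.+1) a i *: 'X^i.
End Ops.

(* Main.v *)
Require Import Defs.
From mathcomp Require Import all_boot all_algebra complex reals.
Local Open Scope ring_scope.
Import GRing.Theory Num.Theory.

Section S.
Variable F : fieldType.

Lemma opDx_lin (c : F) (p q : {poly F}) : opDx (c *: p + q) = c *: opDx p + opDx q.
Proof. by rewrite /opDx /opD /opX mulrDr derivD -scalerAr derivZ. Qed.

Lemma iter_lin i (c : F) (p q : {poly F}) :
  iter i (@opDx F) (c *: p + q) = c *: iter i (@opDx F) p + iter i (@opDx F) q.
Proof. by elim: i => //= i ->; rewrite opDx_lin. Qed.

Lemma iter_scale i (c : F) (p : {poly F}) :
  iter i (@opDx F) (c *: p) = c *: iter i (@opDx F) p.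
Proof.
have := iter_lin i c p 0; rewrite addr0 => ->.
suff -> : iter i (@opDx F) 0 = 0 by rewrite addr0.
elim: i => //= i ->; by rewrite /opDx /opD /opX mulr0 deriv0.
Qed.

Lemma iter_Xn i m : iter i (@opDx F) 'X^m = (m.+1%:R ^+ i) *: 'X^m.
Proof.
elim: i => [|i IH] /=; first by rewrite expr0 scale1r.
rewrite IH.
have -> : opDx ((m.+1%:R ^+ i) *: 'X^m) = (m.+1%:R ^+ i) *: opDx ('X^m : {poly F}).
  by have := opDx_lin (m.+1%:R ^+ i) ('X^m) 0; rewrite !addr0 /opDx /opD /opX mulr0 deriv0 addr0.
by rewrite /opDx /opD /opX -exprS derivXn /= -scaler_nat scalerA exprS mulrC.
Qed.

Lemma Lambda_lin k (a : nat -> F) (c : F) (p q : {poly F}) :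
  Lambda k a (c *: p + q) = c *: Lambda k a p + Lambda k a q.
Proof.
rewrite /Lambda scaler_sumr -big_split /=; apply: eq_bigr => i _.
rewrite /opD derivD derivZ iter_lin scalerDr !scalerA mulrC //.
Qed.

Lemma fpoly_horner k (a : nat -> F) (x : F) : (fpoly k a).[x] = \sum_(i < k.+1) a i * x ^+ i.
Proof.
rewrite /fpoly horner_sum; apply: eq_bigr => i _.
by rewrite hornerZ hornerXn.
Qed.

Lemma Lambda_Xn k (a : nat -> F) m :
  Lambda k a 'X^(m.+1) = (m.+1%:R * (fpoly k a).[m.+1%:R]) *: 'X^m.
Proof.
rewrite /Lambda /opD derivXn /= -scaler_nat fpoly_horner mulr_sumr scaler_suml.
apply: eq_bigr => i _.
by rewrite iter_scale iter_Xn !scalerA mulrA [_ * a i]mulrC.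
Qed.

Lemma Lambda1 k a : Lambda k (a : nat -> F) 1 = 0.
Proof.
rewrite /Lambda big1 // => i _.
rewrite /opD derivC.
suff -> : iter i (@opDx F) 0 = 0 by rewrite scaler0.
elim: (i : nat) => //= j ->; by rewrite /opDx /opD /opX mulr0 deriv0.
Qed.

Lemma fpoly_coef k (a : nat -> F) i : (i <= k)%N -> (fpoly k a)`_i = a i.
Proof.
move=> hi; rewrite /fpoly -(poly_def (k.+1) a) coef_poly.
by rewrite ltnS hi.
Qed.

Lemma fpoly_size k (a : nat -> F) : (size (fpoly k a) <= k.+1)%N.
Proof. by rewrite /fpoly -(poly_def (k.+1) a) size_poly. Qed.

End S.

Theorem proposition2 (R : realType) (k : nat) (a : nat -> R[i]) :
  ((0 < k)%N ->
     ((forall p : {poly R[i]}, Lambda k a p = 0) <->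
      (forall i : nat, (i <= k)%N -> a i = 0)))
  /\
  (a k != 0 ->
     (lowering (Lambda k a) <->
      (forall n : nat, (0 < n)%N -> ~~ root (fpoly k a) n%:R))).
Proof.
have nz : forall m : nat, (m.+1%:R : R[i]) != 0 by move=> m; rewrite pnatr_eq0.
split=> [_|_]; split.
- move=> H.
  have rt : forall m : nat, root (fpoly k a) m.+1%:R.
    move=> m; have := H 'X^(m.+1); rewrite Lambda_Xn => /eqP.
    rewrite scaler_eq0 mulf_eq0 (negbTE (nz m)) /= => /orP [//|].
    by rewrite -size_poly_eq0 size_polyXn.
  have f0 : fpoly k a = 0.
    apply/eqP; apply/negP => /negP pnz.
    have := max_poly_roots pnz (rs := [seq (j.+1)%:R | j <- iota 0 k.+1]).
    rewrite size_map size_iota.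
    have -> : all (root (fpoly k a)) [seq (j.+1)%:R | j <- iota 0 k.+1].
      by apply/allP => x /mapP [j _ ->].
    have -> : uniq [seq ((j.+1)%:R : R[i]) | j <- iota 0 k.+1].
      rewrite map_inj_uniq ?iota_uniq // => x y /eqP.
      by rewrite eqr_nat eqSS => /eqP.
    move=> /(_ isT isT); rewrite ltnNge fpoly_size //.
  by move=> i hi; rewrite -(@fpoly_coef _ k a i hi) f0 coef0.
- move=> H p; rewrite /Lambda big1 // => i hi.
  by rewrite H ?scale0r // -ltnS.
- move=> [_ [_ Hs]] [//|m] _; apply/negP => /eqP r.
  have := Hs m.+1 isT; rewrite Lambda_Xn r mulr0 scale0r size_poly0 //.
- move=> H; split; first exact: Lambda_lin.
  split; first exact: Lambda1.
  move=> [//|m] _; rewrite Lambda_Xn size_scale ?size_polyXn //.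
  by rewrite mulf_neq0 // H.
Qed.
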